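(* Assume the axiom of choice. Let $A$ be a complete Boolean algebra. A map $\nu:A\to[0,\infty)$ is a continuous valuation if and only if it is a completely additive valuation.
   Context: A (positive) valuation on a distributive lattice $L$ is $\nu:L\to[0,\infty)$ with $\nu(0)=0$, $\nu(x)+\nu(y)=\nu(x\vee y)+\nu(x\wedge y)$, and $x\le y\Rightarrow\nu(x)\le\nu(y)$; it is continuous if it preserves existing suprema of directed subsets. A completely additive valuation is a valuation $\nu$ such that for every family $\{x_i\}_{i\in I}$ of pairwise disjoint elements ($x_i\wedge x_j=0$ for $i\neq j$) whose supremum exists, $\nu(\sup_i x_i)=\sum_{i\in I}\nu(x_i)$ with the sum converging absolutely. *)

(* Defs.v *)
From HB Require Import structures.
From mathcomp Require Import all_boot all_order all_algebra.
From mathcomp Require Import all_classical all_reals.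
From mathcomp Require Import ereal esum.
Set Implicit Arguments. Unset Strict Implicit. Unset Printing Implicit Defensive.
Import Order.TTheory GRing.Theory Num.Theory.
Local Open Scope classical_set_scope.
Local Open Scope ring_scope.

Definition is_sup {d} {T : porderType d} (S : set T) (x : T) : Prop :=
  (forall y, S y -> (y <= x)%O) /\
  (forall z, (forall y, S y -> (y <= z)%O) -> (x <= z)%O).

Definition complete {d} (T : porderType d) : Prop :=
  forall S : set T, exists x, is_sup S x.

Definition directed {d} {T : porderType d} (D : set T) : Prop :=
  (exists x, D x) /\
  (forall x y, D x -> D y -> exists2 z, D z & ((x <= z)%O /\ (y <= z)%O)).

Definition valuation {d} {L : bDistrLatticeType d} {R : realType} (nu : L -> R) : Prop :=
  [/\ forall x, 0 <= nu x,
      nu \bot%O = 0,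
      (forall x y, nu x + nu y = nu (x `|` y)%O + nu (x `&` y)%O) &
      (forall x y, (x <= y)%O -> nu x <= nu y)].

Definition continuous_valuation {d} {L : bDistrLatticeType d} {R : realType}
    (nu : L -> R) : Prop :=
  valuation nu /\
  (forall (D : set L) (s : L), directed D -> is_sup D s -> is_sup (nu @` D) (nu s)).

(* Completely additive: for every pairwise disjoint family (x_i)_{i in I} with
   an existing supremum s, nu s = sum_i nu (x_i), the (unordered) sum of the
   nonnegative family converging (absolutely) -- expressed via esum being the
   finite value nu s. *)
Definition completely_additive_valuation {d} {L : bDistrLatticeType d} {R : realType}
    (nu : L -> R) : Prop :=
  valuation nu /\
  (forall (I : choiceType) (x : I -> L) (s : L),
     (forall i j, i <> j -> (x i `&` x j)%O = \bot%O) ->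
     is_sup (range x) s ->
     esum [set: I] (fun i => (nu (x i))%:E) = (nu s)%:E).

(* Main.v *)
Require Import Defs.
From HB Require Import structures.
From mathcomp Require Import all_boot all_order all_algebra.
From mathcomp Require Import all_classical all_reals.
From mathcomp Require Import ereal esum finmap.
Set Implicit Arguments. Unset Strict Implicit. Unset Printing Implicit Defensive.
Import Order.TTheory GRing.Theory Num.Theory.
Local Open Scope classical_set_scope.
Local Open Scope ring_scope.

Section Aux.
Context {d : Order.disp_t} {L : bDistrLatticeType d}.

Lemma meet_join_bot (I : eqType) (a : L) (s : seq I) (x : I -> L) :
  (forall j, j \in s -> (a `&` x j = \bot)%O) ->
  (a `&` \join_(j <- s) x j = \bot)%O.
Proof.
elim: s => [|i s IH] H; first by rewrite big_nil meetx0.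
rewrite big_cons meetUr H ?mem_head // IH ?joinx0 // => j js.
by apply: H; rewrite in_cons js orbT.
Qed.

Lemma val_additive {R : realType} (nu : L -> R) (I : eqType) (x : I -> L)
    (s : seq I) :
  valuation nu -> uniq s ->
  (forall i j, i <> j -> (x i `&` x j)%O = \bot%O) ->
  nu (\join_(i <- s) x i)%O = \sum_(i <- s) nu (x i).
Proof.
move=> [_ nu0 numod _]; elim: s => [|i s IH] /=.
  by rewrite !big_nil nu0.
move=> /andP[iNs us] dis; rewrite !big_cons -IH //.
have := numod (x i) (\join_(j <- s) x j)%O.
rewrite meet_join_bot ?nu0 ?addr0.
  by move=> <-.
by move=> j js; apply: dis => ij; move: iNs; rewrite ij js.
Qed.

End Aux.

Lemma fsum_join {d} {L : bDistrLatticeType d} {R : realType} (nu : L -> R)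
   (I : choiceType) (x : I -> L) (X : set I) :
  valuation nu -> finite_set X ->
  (forall i j, i <> j -> (x i `&` x j)%O = \bot%O) ->
  (\sum_(i \in X) (nu (x i))%:E)%E = (nu (\join_(i <- fset_set X) x i)%O)%:E.
Proof.
move=> nuv fX dis; rewrite fsbig_finite // sumEFin; congr (_%:E).
by rewrite (val_additive nuv _ dis) // fset_uniq.
Qed.

Lemma fwd {d} {L : bDistrLatticeType d} {R : realType} (nu : L -> R) :
  continuous_valuation nu -> completely_additive_valuation nu.
Proof.
move=> [nuv cont]; split => // I x s dis [sub sle].
pose J X := (\join_(i <- fset_set X) x i)%O.
pose D := [set y | exists X, finite_set X /\ y = J X].
have dirD : directed D.
  split; first by exists (J set0); exists set0; split => //; exact: finite_set0.
  move=> _ _ [X [fX ->]] [Y [fY ->]].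
  have fXY : finite_set (X `|` Y) by rewrite finite_setU; split.
  exists (J (X `|` Y)); first by exists (X `|` Y).
  split; apply/joinsP_seq => i + _; rewrite in_fset_set // => Hi;
    by apply: joins_sup_seq => //; rewrite in_fset_set // in_setU Hi ?orbT.
have supD : is_sup D s.
  split.
    move=> _ [X0 [fX0 ->]]; apply/joinsP_seq => i _ _; apply: sub; by exists i.
  move=> z zub; apply: sle => _ [i _ <-].
  apply: le_trans (zub (J [set i]) _); last by exists [set i]; split => //; exact: finite_set1.
  by apply: joins_sup_seq => //; rewrite fset_set1 inE.
have [nub nuleast] := cont D s dirD supD.
have e_le : (esum [set: I] (fun i => (nu (x i))%:E) <= (nu s)%:E)%E.
  apply: ge_ereal_sup => _ [X [fX _] <-].
  rewrite fsum_join // lee_fin; apply: nub; exists (J X) => //; by exists X.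
have e_ge : (0 <= esum [set: I] (fun i => (nu (x i))%:E))%E.
  by apply: esum_ge0 => i _; rewrite lee_fin; case: nuv.
move: e_le e_ge; case E : (esum _ _) => [r| |] //= e_le e_ge.
congr (_%:E); apply/eqP; rewrite eq_le -lee_fin e_le /=.
apply: nuleast => _ [_ [X [fX ->]] <-].
rewrite -lee_fin -E -fsum_join //; apply: ereal_sup_ubound; exists X => //.
Qed.

Lemma join_below {d} {L : bDistrLatticeType d} (I : eqType) (D : set L)
   (x : I -> L) (l : seq I) :
  directed D -> (forall i, exists2 e, D e & (x i <= e)%O) ->
  exists2 e, D e & (\join_(i <- l) x i <= e)%O.
Proof.
move=> [[e0 De0] dirD] H; elim: l => [|i l [e De le]].
  by exists e0 => //; rewrite big_nil le0x.
have [f Df lf] := H i; have [g Dg [eg fg]] := dirD _ _ De Df.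
exists g => //; rewrite big_cons leUx (le_trans lf fg) /=.
exact: le_trans le eg.
Qed.

Lemma bwd {d} {A : ctbDistrLatticeType d} {R : realType} (nu : A -> R) :
  complete A -> completely_additive_valuation nu -> continuous_valuation nu.
Proof.
move=> compA [nuv ca]; split => // D s dirD [sub sle].
have numono : forall a b, (a <= b)%O -> nu a <= nu b by case: nuv.
split; first by move=> _ [e De <-]; apply: numono; exact: sub.
move=> z zub.
pose P := fun F : set A => (forall a, F a -> a != \bot%O /\ exists2 e, D e & (a <= e)%O) /\
   (forall a b, F a -> F b -> a <> b -> (a `&` b)%O = \bot%O).
have [M [[PM1 PM2] Mmax]] : exists M, P M /\ forall B, M `<` B -> ~ P B.
  apply: Zorn_bigcup => F FP Ftot; split.
    by move=> a [X FX Xa]; exact: (FP X FX).1.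
  move=> a b [X FX Xa] [Y FY Yb] ab.
  have [XY|YX] := Ftot X Y FX FY.
    by apply: (FP Y FY).2 => //; exact: XY.
  by apply: (FP X FX).2 => //; exact: YX.
pose x := fun a : A => if `[< M a >] then a else \bot%O.
have dis : forall i j, i <> j -> (x i `&` x j)%O = \bot%O.
  move=> i j ij; rewrite /x; case: asboolP => Mi; case: asboolP => Mj;
    by rewrite ?meet0x ?meetx0 //; exact: PM2.
have [t [tub tle]] := compA (range x).
have Mt : forall a, M a -> (a <= t)%O.
  by move=> a Ma; apply: tub; exists a => //; rewrite /x; case: asboolP.
have st : (s <= t)%O.
  apply: sle => e De; apply/negPn/negP => et.
  pose f := (e `&` ~` t)%O.
  have fn0 : f != \bot%O.
    apply/negP => /eqP f0; move/negP: et; apply.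
    by rewrite -[t]Order.CTBDistrLatticeTheory.complK -Order.CTBDistrLatticeTheory.disj_leC; apply/eqP; exact: f0.
  have Mf : ~ M f.
    move=> Mf; move/negP: fn0; apply; rewrite -lex0.
    have : (f <= t `&` ~` t)%O by rewrite lexI Mt // leIr.
    by rewrite Order.CTBDistrLatticeTheory.meetxC.
  apply: (Mmax (M `|` [set f])).
    split; first by move=> a Ma; left.
    by move=> H; apply: Mf; apply: H; right.
  split.
    move=> a [/PM1 //|/= ->]; split => //; exists e => //; exact: leIl.
  have key : forall a, M a -> (a `&` f = \bot)%O.
    move=> a Ma; apply/eqP; rewrite -lex0.
    have : (a `&` f <= t `&` ~` t)%O.
      by rewrite lexI (leIxl _ (Mt _ Ma)) /= leIxr // /f leIr.
    by rewrite Order.CTBDistrLatticeTheory.meetxC.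
  move=> a b [Ma|/= ->] [Mb|/= ->] ab.
  - exact: PM2.
  - exact: key.
  - by rewrite meetC; exact: key.
  - by [].
have := ca A x t dis (conj tub tle) => esumE.
apply: le_trans (numono _ _ st) _.
rewrite -lee_fin -esumE; apply: ge_ereal_sup => _ [X [fX _] <-].
rewrite fsum_join // lee_fin.
have [e De le] : exists2 e, D e & (\join_(i <- fset_set X) x i <= e)%O.
  apply: join_below => // i; rewrite /x; case: asboolP => Mi.
    by have [_ ] := PM1 i Mi.
  by have [[e0 De0] _] := dirD; exists e0 => //; exact: le0x.
apply: le_trans (numono _ _ le) _; apply: zub; by exists e.
Qed.

Theorem mainTheorem15 (d : Order.disp_t) (A : ctbDistrLatticeType d) (R : realType)
    (nu : A -> R) :
  complete A ->
  (continuous_valuation nu <-> completely_additive_valuation nu).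
Proof.
move=> compA; split; [exact: fwd | exact: bwd].
Qed.
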